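(* Consider a transformer composed of $L$ layers with (1) output weights $\mathbf{H}\in\mathbb{R}^{m\times d}$, (2) self-attention weights: combined key-query weights $(\mathbf{W}_i)_{i=1}^L\in\mathbb{R}^{d\times d}$ and value weights $(\mathbf{V}_i)_{i=1}^L\in\mathbb{R}^{d\times d}$, (3) MLP weights $(\mathbf{M}^{(i)}_j)_{i=1,j=1}^{L,m}\in\mathbb{R}^{d\times d}$ and activation $\phi\in\{\text{ReLU},\text{Identity}\}$. For some $\Gamma>0$, assume $\|\mathbf{V}_i\|\leq 1,\|\mathbf{M}^{(i)}_j\|\leq 1, \|\mathbf{W}_i\|\leq \Gamma/2$ and $\|\mathbf{H}\|_{2,\infty}\leq c/m$. Suppose the input is $\mathcal{S}=(\mathbf{z}_1,\dots,\mathbf{z}_m)$ with $\|\mathbf{z}_i\|_2\leq 1$. The model prediction is given by $\mathcal{S}_{(0)}=\mathcal{S}$, layer $i$ outputs $\mathcal{S}_{(i)}=\texttt{Parallel\_MLP}_{\mathbf{M}^{(i)}}(\texttt{Att}_{\mathbf{W}_i,\mathbf{V}_i}(\mathcal{S}_{(i-1)}))$, where $\texttt{Att}_{\mathbf{W}_i,\mathbf{V}_i}(\mathcal{S})=\mathrm{softmax}(\mathcal{S}^\top \mathbf{W}_i \mathcal{S}) \mathcal{S}\mathbf{V}_i$ (row-wise softmax) and $\texttt{Parallel\_MLP}$ applies $\mathbf{x}\mapsto\phi(\mathbf{M}^{(i)}_{j}\mathbf{x})$ to the $j$-th token of the attention output, and $\mathrm{TF}(\mathcal{S})=\langle\mathbf{H},\mathcal{S}_{(L)}\rangle$.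 Then, first, this model is properly normalized in the sense that it can attain $\mathrm{TF}(\mathcal{S})=\pm c$. Second, this model obeys the stability guarantee \[ |\mathrm{TF}(\mathcal{S})-\mathrm{TF}(\mathcal{S}')|\leq \frac{c}{m}((1+\Gamma)e^\Gamma)^L \|\mathcal{S}-\mathcal{S}'\|_{2,1} \] for any two such inputs $\mathcal{S},\mathcal{S}'$.
   Context: For a matrix $\mathbf{A}$, $\|\mathbf{A}\|_{2,p}$ denotes the $\ell_p$ norm of the vector of Euclidean norms of its rows. *)

(* Defs.v *)
From HB Require Import structures.
From mathcomp Require Import all_boot all_order all_algebra.
From mathcomp Require Import all_classical all_reals all_analysis.
Set Implicit Arguments. Unset Strict Implicit. Unset Printing Implicit Defensive.
Import Order.TTheory GRing.Theory Num.Theory.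
Local Open Scope classical_set_scope.
Local Open Scope ring_scope.

(* Convention: a sequence S = (z_1,...,z_m) of tokens z_i in R^d is an
   m x d matrix whose i-th row is z_i (as a row vector).  A d x d matrix A
   acts on a token x as the usual matrix-vector product A x, which in row
   form is x *m A^T. *)

Inductive activation := ReLU | Identity.

Section Defs.
Context {R : realType}.

Definition norm2 {n : nat} (x : 'rV[R]_n) : R := Num.sqrt (\sum_i x 0 i ^+ 2).

Definition mv {n : nat} (A : 'M[R]_n) (x : 'rV[R]_n) : 'rV[R]_n := x *m A^T.

Definition opnorm {n : nat} (A : 'M[R]_n) : R :=
  sup [set norm2 (mv A x) | x in [set x : 'rV[R]_n | norm2 x <= 1]].

Definition norm2inf {m n : nat} (A : 'M[R]_(m, n)) : R :=
  \big[Num.max/0]_(i < m) norm2 (row i A).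
Definition norm21 {m n : nat} (A : 'M[R]_(m, n)) : R :=
  \sum_(i < m) norm2 (row i A).

Definition softmax {m : nat} (u : 'rV[R]_m) : 'rV[R]_m :=
  \row_j (expR (u 0 j) / \sum_k expR (u 0 k)).

Definition att {m d : nat} (W V : 'M[R]_d) (S : 'M[R]_(m, d)) : 'M[R]_(m, d) :=
  let scores : 'M[R]_m := \matrix_(i, j) ((row i S *m W^T) *m (row j S)^T) 0 0 in
  \matrix_(i, k) (\sum_j (softmax (row i scores)) 0 j * (mv V (row j S)) 0 k).

Definition act_fun (phi : activation) (x : R) : R :=
  match phi with ReLU => Num.max x 0 | Identity => x end.

Definition par_mlp {m d : nat} (phi : activation) (M : 'I_m -> 'M[R]_d)
  (X : 'M[R]_(m, d)) : 'M[R]_(m, d) :=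
  \matrix_(j, k) act_fun phi ((mv (M j) (row j X)) 0 k).

(* S_(k); layers are indexed 0, ..., L-1 (layer i+1 of the paper is index i) *)
Fixpoint tf_layers {m d : nat} (phi : activation) (W V : nat -> 'M[R]_d)
  (M : nat -> 'I_m -> 'M[R]_d) (k : nat) (S : 'M[R]_(m, d)) : 'M[R]_(m, d) :=
  match k with
  | 0 => S
  | k'.+1 => par_mlp phi (M k') (att (W k') (V k') (tf_layers phi W V M k' S))
  end.

Definition TF {m d : nat} (phi : activation) (L : nat) (H : 'M[R]_(m, d))
  (W V : nat -> 'M[R]_d) (M : nat -> 'I_m -> 'M[R]_d) (S : 'M[R]_(m, d)) : R :=
  \sum_(j < m) \sum_(k < d) H j k * (tf_layers phi W V M L S) j k.

Definition valid_weights {m d : nat} (L : nat) (c Gamma : R) (H : 'M[R]_(m, d))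
  (W V : nat -> 'M[R]_d) (M : nat -> 'I_m -> 'M[R]_d) : Prop :=
  (forall i, (i < L)%N ->
     opnorm (V i) <= 1 /\ (forall j, opnorm (M i j) <= 1) /\ opnorm (W i) <= Gamma / 2)
  /\ norm2inf H <= c / m%:R.

Definition valid_input {m d : nat} (S : 'M[R]_(m, d)) : Prop :=
  forall i, norm2 (row i S) <= 1.

End Defs.

(* Main.v *)
Require Import Defs.
From HB Require Import structures.
From mathcomp Require Import all_boot all_order all_algebra.
From mathcomp Require Import all_classical all_reals all_analysis.
From mathcomp Require Import ring lra.
Import Order.TTheory GRing.Theory Num.Theory.
Local Open Scope ring_scope.

Set Implicit Arguments. Unset Strict Implicit. Unset Printing Implicit Defensive.

Section Vec.
Context {R : realType}.

Definition dot {n : nat} (u v : 'rV[R]_n) : R := \sum_k u 0 k * v 0 k.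

Lemma dotC n (u v : 'rV[R]_n) : dot u v = dot v u.
Proof. by apply: eq_bigr => k _; rewrite mulrC. Qed.

Lemma dotDl n (u v w : 'rV[R]_n) : dot (u + v) w = dot u w + dot v w.
Proof. by rewrite /dot -big_split; apply: eq_bigr => k _; rewrite mxE mulrDl. Qed.

Lemma dotZl n a (u w : 'rV[R]_n) : dot (a *: u) w = a * dot u w.
Proof. by rewrite /dot mulr_sumr; apply: eq_bigr => k _; rewrite mxE mulrA. Qed.

Lemma dotNl n (u w : 'rV[R]_n) : dot (- u) w = - dot u w.
Proof. by rewrite -scaleN1r dotZl mulN1r. Qed.

Lemma dotBl n (u v w : 'rV[R]_n) : dot (u - v) w = dot u w - dot v w.
Proof. by rewrite dotDl dotNl. Qed.

Lemma dotDr n (u v w : 'rV[R]_n) : dot w (u + v) = dot w u + dot w v.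
Proof. by rewrite dotC dotDl !(dotC w). Qed.
Lemma dotZr n a (u w : 'rV[R]_n) : dot w (a *: u) = a * dot w u.
Proof. by rewrite dotC dotZl dotC. Qed.
Lemma dotNr n (u w : 'rV[R]_n) : dot w (- u) = - dot w u.
Proof. by rewrite dotC dotNl dotC. Qed.
Lemma dotBr n (u v w : 'rV[R]_n) : dot w (u - v) = dot w u - dot w v.
Proof. by rewrite dotC dotBl !(dotC w). Qed.

Lemma dot0l n (w : 'rV[R]_n) : dot 0 w = 0.
Proof. by rewrite /dot big1 // => k _; rewrite mxE mul0r. Qed.
Lemma dot0r n (w : 'rV[R]_n) : dot w 0 = 0.
Proof. by rewrite dotC dot0l. Qed.

Lemma dot_suml n (I : Type) (r : seq I) (P : pred I) (F : I -> 'rV[R]_n) w :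
  dot (\sum_(i <- r | P i) F i) w = \sum_(i <- r | P i) dot (F i) w.
Proof.
rewrite /dot; under eq_bigr => k _ do rewrite summxE mulr_suml.
by rewrite exchange_big.
Qed.

Lemma dot_sumr n (I : Type) (r : seq I) (P : pred I) (F : I -> 'rV[R]_n) w :
  dot w (\sum_(i <- r | P i) F i) = \sum_(i <- r | P i) dot w (F i).
Proof. by rewrite dotC dot_suml; apply: eq_bigr => i _; rewrite dotC. Qed.

Lemma dot_ge0 n (u : 'rV[R]_n) : 0 <= dot u u.
Proof. by apply: sumr_ge0 => k _; rewrite -expr2 sqr_ge0. Qed.

Lemma dot_norm2 n (u : 'rV[R]_n) : norm2 u = Num.sqrt (dot u u).
Proof. by rewrite /norm2 /dot; congr Num.sqrt; apply: eq_bigr => k _; rewrite expr2. Qed.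

Lemma norm2_ge0 n (u : 'rV[R]_n) : 0 <= norm2 u.
Proof. exact: sqrtr_ge0. Qed.

Lemma norm2_sq n (u : 'rV[R]_n) : norm2 u ^+ 2 = dot u u.
Proof. by rewrite dot_norm2 sqr_sqrtr // dot_ge0. Qed.

Lemma dot_eq0 n (u : 'rV[R]_n) : dot u u = 0 -> u = 0.
Proof.
move=> H; apply/rowP => k; rewrite mxE.
have P0 : forall i : 'I_n, xpredT i -> 0 <= u 0 i * u 0 i.
  by move=> i _; rewrite -expr2 sqr_ge0.
have := @psumr_eq0P R _ xpredT (fun k => u 0 k * u 0 k) P0 H k isT.
by move/eqP; rewrite mulf_eq0 orbb => /eqP.
Qed.

Lemma CS n (u v : 'rV[R]_n) : dot u v <= norm2 u * norm2 v.
Proof.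
set a := norm2 u; set b := norm2 v.
have a0 : 0 <= a by exact: norm2_ge0.
have b0 : 0 <= b by exact: norm2_ge0.
have H : 0 <= dot (b *: u - a *: v) (b *: u - a *: v) by exact: dot_ge0.
rewrite !(dotBl, dotBr, dotZl, dotZr) in H.
have ua : dot u u = a ^+ 2 by rewrite norm2_sq.
have vb : dot v v = b ^+ 2 by rewrite norm2_sq.
rewrite ua vb (dotC v u) in H.
have [ab0|ab0] := eqVneq (a * b) 0.
  move/eqP: ab0; rewrite mulf_eq0 => /orP[] /eqP z.
  - have -> : u = 0 by apply: dot_eq0; rewrite ua z expr0n.
    by rewrite dot0l z mul0r.
  - have -> : v = 0 by apply: dot_eq0; rewrite vb z expr0n.
    by rewrite dot0r z mulr0.
have abp : 0 < a * b by rewrite lt_def ab0 mulr_ge0.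
have : a * b * dot u v <= a * b * (a * b) by nra.
by rewrite ler_pM2l.
Qed.

Lemma norm2N n (u : 'rV[R]_n) : norm2 (- u) = norm2 u.
Proof. by rewrite !dot_norm2 dotNl dotNr opprK. Qed.

Lemma CSabs n (u v : 'rV[R]_n) : `|dot u v| <= norm2 u * norm2 v.
Proof.
rewrite ler_norml CS andbT; have := CS u (- v); rewrite dotNr norm2N; lra.
Qed.

Lemma norm2D n (u v : 'rV[R]_n) : norm2 (u + v) <= norm2 u + norm2 v.
Proof.
rewrite (dot_norm2 (u + v)).
have h : 0 <= norm2 u + norm2 v by rewrite addr_ge0 // norm2_ge0.
rewrite -[X in _ <= X](ger0_norm h) -(sqrtr_sqr (norm2 u + norm2 v)) ler_sqrt ?sqr_ge0 //.
rewrite !(dotDl, dotDr) (dotC v u) -!norm2_sq.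
have := CS u v; nra.
Qed.

Lemma norm2B n (u v : 'rV[R]_n) : norm2 (u - v) <= norm2 u + norm2 v.
Proof. by rewrite -(norm2N v); exact: norm2D. Qed.

Lemma norm2Z n a (u : 'rV[R]_n) : norm2 (a *: u) = `|a| * norm2 u.
Proof.
rewrite !dot_norm2 dotZl dotZr mulrA sqrtrM ?mul_self_ge0 // -[a * a]expr2.
  by rewrite (sqrtr_sqr a).
by rewrite sqr_ge0.
Qed.

Lemma norm2_0 n : norm2 (0 : 'rV[R]_n) = 0.
Proof. by rewrite dot_norm2 dot0l sqrtr0. Qed.

Lemma norm2_sum n (I : Type) (r : seq I) (P : pred I) (F : I -> 'rV[R]_n) :
  norm2 (\sum_(i <- r | P i) F i) <= \sum_(i <- r | P i) norm2 (F i).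
Proof.
elim/big_rec2: _ => [|i y1 y2 _ IH]; first by rewrite norm2_0.
exact: le_trans (norm2D _ _) (lerD (lexx _) IH).
Qed.

Lemma norm2_distC n (u v : 'rV[R]_n) : norm2 (u - v) = norm2 (v - u).
Proof. by rewrite -norm2N opprB. Qed.

End Vec.

Section Mat.
Context {R : realType}.

Lemma mvD n (A : 'M[R]_n) x y : mv A (x + y) = mv A x + mv A y.
Proof. by rewrite /mv mulmxDl. Qed.
Lemma mvZ n (A : 'M[R]_n) a x : mv A (a *: x) = a *: mv A x.
Proof. by rewrite /mv scalemxAl. Qed.
Lemma mvN n (A : 'M[R]_n) x : mv A (- x) = - mv A x.
Proof. by rewrite /mv mulNmx. Qed.
Lemma mvB n (A : 'M[R]_n) x y : mv A (x - y) = mv A x - mv A y.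
Proof. by rewrite mvD mvN. Qed.
Lemma mv0 n (A : 'M[R]_n) : mv A 0 = 0.
Proof. by rewrite /mv mul0mx. Qed.
Lemma mv_sum n (A : 'M[R]_n) (I : Type) (r : seq I) (P : pred I) (F : I -> 'rV[R]_n) :
  mv A (\sum_(i <- r | P i) F i) = \sum_(i <- r | P i) mv A (F i).
Proof. by rewrite /mv mulmx_suml. Qed.

Lemma mv_entry n (A : 'M[R]_n) x i : (mv A x) 0 i = dot x (row i A).
Proof. by rewrite /mv mxE; apply: eq_bigr => k _; rewrite !mxE. Qed.

Lemma opnorm_ub n (A : 'M[R]_n) x : norm2 x <= 1 -> norm2 (mv A x) <= opnorm A.
Proof.
move=> hx; apply: ub_le_sup; last by exists x.
exists (Num.sqrt (\sum_i norm2 (row i A) ^+ 2)) => _ [y hy <-].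
rewrite /norm2 ler_wsqrtr //; apply: ler_sum => i _.
rewrite -/(norm2 (row i A)) mv_entry.
have h1 := CSabs y (row i A).
have h2 : norm2 y * norm2 (row i A) <= norm2 (row i A).
  by move: hy => /= hy; have := norm2_ge0 (row i A); have := norm2_ge0 y; nra.
have h3 := norm2_ge0 (row i A).
move: h1; rewrite ler_norml => /andP[h4 h5].
set d := dot y (row i A) in h4 h5 *; set r := norm2 (row i A) in h2 h3 h4 h5 *.
have e1 : 0 <= r - d by lra.
have e2 : 0 <= r + d by lra.
have e3 : (r - d) * (r + d) = r * r - d * d by ring.
have := mulr_ge0 e1 e2; rewrite e3 !expr2; lra.
Qed.

Lemma norm2_eq0 n (x : 'rV[R]_n) : norm2 x = 0 -> x = 0.
Proof. by move=> h; apply: dot_eq0; rewrite -norm2_sq h expr0n. Qed.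

Lemma opnorm_le n (A : 'M[R]_n) a x : opnorm A <= a -> norm2 (mv A x) <= a * norm2 x.
Proof.
move=> ha.
have [->|xn0] := eqVneq x 0.
  rewrite mv0 norm2_0 mulr0 //.
have nx : 0 < norm2 x.
  rewrite lt_def norm2_ge0 andbT; apply/eqP => /norm2_eq0 h; by rewrite h eqxx in xn0.
have hy : norm2 ((norm2 x)^-1 *: x) <= 1.
  by rewrite norm2Z ger0_norm ?invr_ge0 ?norm2_ge0 // mulVf ?gt_eqF.
have := le_trans (opnorm_ub A hy) ha.
rewrite mvZ norm2Z ger0_norm ?invr_ge0 ?norm2_ge0 // => h.
by rewrite -ler_pdivrMr // mulrC.
Qed.

End Mat.

Section Ineq.
Context {R : realType}.

Lemma key_ineq (G r : R) : 0 < G -> 0 <= r -> r <= 1 ->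
  (1 + G) * (((1 + r) * expR (G * (1 + r) / 2) + (1 - r) * expR (- (G * (1 + r) / 2))) / 2)
  + G / 2 * ((1 - r ^+ 2) * (2 * expR (G * (1 + r) / 2) - 1))
  <= (1 + G) * expR G.
Proof.
move=> G0 r0 r1.
set rho : R := G * (1 + r) / 2.
set s : R := (1 - r) / 2.
set E := expR rho.
set Ei := expR (- rho).
have hG : G = rho + G * s by rewrite /rho /s; field.
have EEi : E * Ei = 1 by rewrite /E /Ei -expRD subrr expR0.
have rho0 : 0 <= rho by rewrite /rho; apply: divr_ge0 => //; apply: mulr_ge0; lra.
have s0 : 0 <= s by rewrite /s; lra.
have rhoG : rho <= G.
  have h : 0 <= G * (1 - r) by apply: mulr_ge0; lra.
  have -> : rho = G - G * (1 - r) / 2 by rewrite /rho; field.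
  lra.
have E1 : 1 + rho <= E by exact: expR_ge1Dx.
have Ei0 : 0 < Ei by exact: expR_gt0.
have Ei1 : Ei <= 1 by rewrite /Ei -expR0 ler_expR; lra.
have E2 : 1 + 2 * rho <= E * E by rewrite /E -expRD; have := expR_ge1Dx (rho + rho); lra.
set F := expR (G * s).
have F1 : 1 + G * s <= F by exact: expR_ge1Dx.
have EG : expR G = E * F by rewrite {1}hG expRD.
rewrite EG.
have r_s : r = 1 - 2 * s by rewrite /s; field.
have rho_s : rho = G * (1 - s) by rewrite /rho r_s; field.
have st4 : 0 <= (1 + rho) ^+ 2 * E - (1 + rho) * Ei - 2 * rho * (2 * E - 1).
  have E0 : 0 < E by exact: expR_gt0.
  suff : 0 <= E * ((1 + rho) ^+ 2 * E - (1 + rho) * Ei - 2 * rho * (2 * E - 1)).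
    by rewrite pmulr_rge0.
  have -> : E * ((1 + rho) ^+ 2 * E - (1 + rho) * Ei - 2 * rho * (2 * E - 1))
     = (1 - rho) ^+ 2 * (E * E) + 2 * rho * E - (1 + rho) * (E * Ei)
       by ring.
  rewrite EEi.
  have h1 : (1 - rho) ^+ 2 * (1 + 2 * rho) <= (1 - rho) ^+ 2 * (E * E).
    by rewrite ler_wpM2l // sqr_ge0.
  have h2 : 2 * rho * (1 + rho) <= 2 * rho * E by rewrite ler_wpM2l //; lra.
  have h3 : 0 <= rho * (1 - rho + 2 * rho ^+ 2).
    apply: mulr_ge0 => //; nra.
  have h4 : (1 - rho) ^+ 2 * (1 + 2 * rho) + 2 * rho * (1 + rho) - (1 + rho) * 1
     = rho * (1 - rho + 2 * rho ^+ 2) by ring.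
  lra.
have st3 : (1 + rho) ^+ 2 * E - (1 + rho) * Ei <= (1 + G) ^+ 2 * E - (1 + G) * Ei.
  rewrite -subr_ge0.
  have -> : (1 + G) ^+ 2 * E - (1 + G) * Ei - ((1 + rho) ^+ 2 * E - (1 + rho) * Ei)
     = (G - rho) * ((2 + G + rho) * E - Ei) by ring.
  apply: mulr_ge0; first lra.
  have : 2 <= (2 + G + rho) * E by have := mulr_ge0 (ltW G0) rho0; nra.
  lra.
have st2 : 0 <= s * ((1 + G) * ((1 + G) * E - Ei) - 2 * rho * (2 * E - 1)).
  apply: mulr_ge0 => //.
  have -> : (1 + G) * ((1 + G) * E - Ei) = (1 + G) ^+ 2 * E - (1 + G) * Ei by ring.
  lra.
have st1 : (1 + G) * (E * (1 + G * s)) <= (1 + G) * (E * F).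
  apply: ler_wpM2l; first lra.
  by apply: ler_wpM2l => //; apply/ltW/expR_gt0.
have fin : (1 + G) * (E * (1 + G * s))
  - ((1 + G) * (((1 + r) * E + (1 - r) * Ei) / 2) + G / 2 * ((1 - r ^+ 2) * (2 * E - 1)))
  = s * ((1 + G) * ((1 + G) * E - Ei) - 2 * rho * (2 * E - 1)).
  by rewrite rho_s r_s; field.
lra.
Qed.

End Ineq.

Section Core.
Context {R : realType}.

Lemma jensen_exp m (x : 'I_m -> R) :
  (0 < m)%N -> m%:R * expR ((m%:R)^-1 * \sum_l x l) <= \sum_l expR (x l).
Proof.
move=> m0; set xb := (m%:R)^-1 * \sum_l x l.
have mr0 : (0 : R) < m%:R by rewrite ltr0n.
have h l : expR xb * (1 + (x l - xb)) <= expR (x l).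
  have -> : expR (x l) = expR xb * expR (x l - xb) by rewrite -expRD addrC subrK.
  by rewrite ler_wpM2l ?expR_ge1Dx // ltW // expR_gt0.
apply: le_trans (ler_sum _ (fun l _ => h l)).
rewrite -mulr_sumr big_split /= sumr_const card_ord sumrB sumr_const card_ord.
have -> : \sum_l x l = m%:R * xb by rewrite /xb mulrA mulfV ?gt_eqF // mul1r.
rewrite -[(1 : R) *+ m]mulr_natl mulr1 -[xb *+ m]mulr_natl subrr addr0 mulrC //.
Qed.

Lemma chord_exp (rho y : R) : 0 < rho -> `|y| <= rho ->
  expR y <= ((rho + y) * expR rho + (rho - y) * expR (- rho)) / (2 * rho).
Proof.
move=> r0; rewrite ler_norml => /andP[h1 h2].
rewrite ler_pdivlMr; last by rewrite mulr_gt0.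
have e1 : expR y * (1 + (rho - y)) <= expR rho.
  have -> : expR rho = expR y * expR (rho - y) by rewrite -expRD addrC subrK.
  by rewrite ler_wpM2l ?expR_ge1Dx // ltW // expR_gt0.
have e2 : expR y * (1 + (- rho - y)) <= expR (- rho).
  have -> : expR (- rho) = expR y * expR (- rho - y) by rewrite -expRD addrC subrK.
  by rewrite ler_wpM2l ?expR_ge1Dx // ltW // expR_gt0.
have a1 : 0 <= rho + y by lra.
have a2 : 0 <= rho - y by lra.
have f1 := ler_wpM2l a1 e1.
have f2 := ler_wpM2l a2 e2.
have -> : expR y * (2 * rho) =
  (rho + y) * (expR y * (1 + (rho - y))) + (rho - y) * (expR y * (1 + (- rho - y))) by ring.
lra.
Qed.


Definition sc m d (W : 'M[R]_d) (S : 'M[R]_(m, d)) (i j : 'I_m) : R :=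
  dot (mv W (row i S)) (row j S).
Definition Zs m d (W : 'M[R]_d) (S : 'M[R]_(m, d)) (i : 'I_m) : R :=
  \sum_l expR (sc W S i l).
Definition pr m d (W : 'M[R]_d) (S : 'M[R]_(m, d)) (i j : 'I_m) : R :=
  expR (sc W S i j) / Zs W S i.
Definition mu m d (W : 'M[R]_d) (S : 'M[R]_(m, d)) (i : 'I_m) : 'rV[R]_d :=
  \sum_j pr W S i j *: row j S.
Definition zbar m d (S : 'M[R]_(m, d)) : 'rV[R]_d := (m%:R)^-1 *: \sum_j row j S.

Lemma Zs_gt0 m d (W : 'M[R]_d) (S : 'M[R]_(m, d)) i : 0 < Zs W S i.
Proof.
rewrite /Zs (bigD1 i) //= ltr_pwDl ?expR_gt0 //.
by apply: sumr_ge0 => l _; exact/ltW/expR_gt0.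
Qed.

Lemma pr_ge0 m d (W : 'M[R]_d) (S : 'M[R]_(m, d)) i j : 0 <= pr W S i j.
Proof. by rewrite /pr divr_ge0 // ltW ?expR_gt0 ?Zs_gt0. Qed.

Lemma sum_pr m d (W : 'M[R]_d) (S : 'M[R]_(m, d)) i : \sum_j pr W S i j = 1.
Proof. by rewrite /pr -mulr_suml -/(Zs W S i) mulfV // gt_eqF // Zs_gt0. Qed.

Definition validS m d (S : 'M[R]_(m, d)) := forall j, norm2 (row j S) <= 1.

Lemma norm2_convex m d (p : 'I_m -> R) (z : 'I_m -> 'rV[R]_d) :
  (forall j, 0 <= p j) -> \sum_j p j = 1 -> (forall j, norm2 (z j) <= 1) ->
  norm2 (\sum_j p j *: z j) <= 1.
Proof.
move=> p0 p1 z1; apply: le_trans (norm2_sum _ _ _) _.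
rewrite -p1; apply: ler_sum => j _; rewrite norm2Z ger0_norm //.
by rewrite -[X in _ <= X]mulr1 ler_wpM2l.
Qed.

Lemma mu_norm m d (W : 'M[R]_d) (S : 'M[R]_(m, d)) i :
  validS S -> norm2 (mu W S i) <= 1.
Proof. by move=> vS; apply: norm2_convex => //; [exact: pr_ge0|exact: sum_pr]. Qed.

Lemma zbar_norm m d (S : 'M[R]_(m, d)) : (0 < m)%N -> validS S -> norm2 (zbar S) <= 1.
Proof.
move=> m0 vS; rewrite /zbar scaler_sumr; apply: norm2_convex.
- by move=> j; rewrite invr_ge0 ler0n.
- by rewrite sumr_const card_ord -[_ *+ m]mulr_natr mulVf // pnatr_eq0 -lt0n.
- exact: vS.
Qed.

Lemma dot_zbar m d (S : 'M[R]_(m, d)) w :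
  dot w (zbar S) = (m%:R)^-1 * \sum_j dot w (row j S).
Proof. by rewrite /zbar dotZr dot_sumr. Qed.

Lemma pr_le m d (W : 'M[R]_d) (S : 'M[R]_(m, d)) i j : (0 < m)%N ->
  pr W S i j <= expR (dot (mv W (row i S)) (row j S - zbar S)) / m%:R.
Proof.
move=> m0.
have mr0 : (0 : R) < m%:R by rewrite ltr0n.
have J := jensen_exp (fun l => sc W S i l) m0.
rewrite -/(Zs W S i) in J.
have E : (m%:R)^-1 * \sum_l sc W S i l = dot (mv W (row i S)) (zbar S) by rewrite dot_zbar.
rewrite E in J.
rewrite /pr ler_pdivrMr ?Zs_gt0 //.
apply: le_trans (_ : expR (dot (mv W (row i S)) (row j S - zbar S)) / m%:R *
   (m%:R * expR (dot (mv W (row i S)) (zbar S))) <= _).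
  rewrite mulrA divfK ?gt_eqF // -expRD dotBr subrK //.
rewrite ler_wpM2l // divr_ge0 // ?ltW // expR_gt0.
Qed.


Lemma sum_rows_zbar m d (S : 'M[R]_(m, d)) : (0 < m)%N ->
  \sum_j row j S = m%:R *: zbar S.
Proof.
move=> m0; rewrite /zbar scalerA mulfV ?scale1r // pnatr_eq0 -lt0n //.
Qed.

Lemma sum_affine m (a b : R) (y : 'I_m -> R) :
  \sum_i (a + b * y i) = m%:R * a + b * \sum_i y i.
Proof. by rewrite big_split /= sumr_const card_ord mulr_natl mulr_sumr. Qed.

Lemma C_bound m d (W : 'M[R]_d) (S : 'M[R]_(m, d)) (G : R) k :
  (0 < m)%N -> 0 < G -> validS S -> opnorm W <= G / 2 ->
  \sum_i pr W S i k <=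
  ((1 + norm2 (zbar S)) * expR (G * (1 + norm2 (zbar S)) / 2)
   + (1 - norm2 (zbar S)) * expR (- (G * (1 + norm2 (zbar S)) / 2))) / 2.
Proof.
move=> m0 G0 vS hW.
set zb := zbar S; set r := norm2 zb; set rho := G * (1 + r) / 2.
set E := expR rho; set Ei := expR (- rho).
have mr0 : (0 : R) < m%:R by rewrite ltr0n.
have r0 : 0 <= r by exact: norm2_ge0.
have r1 : r <= 1 by exact: zbar_norm.
have rho0 : 0 < rho by rewrite /rho; apply: divr_gt0 => //; apply: mulr_gt0 => //; lra.
have Wb x : norm2 (mv W x) <= G / 2 * norm2 x by exact: opnorm_le.
have dk : norm2 (row k S - zb) <= 1 + r by apply: le_trans (norm2B _ _) _; rewrite lerD2r.
have yb i : `|dot (mv W (row i S)) (row k S - zb)| <= rho.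
  apply: le_trans (CSabs _ _) _.
  have -> : rho = (G / 2 * 1) * (1 + r) by rewrite /rho; field.
  apply: ler_pM; rewrite ?norm2_ge0 //.
  apply: le_trans (Wb _) _.
  by apply: ler_wpM2l; [apply: divr_ge0; lra|exact: vS].
have EEi : Ei <= E by rewrite /E /Ei ler_expR; lra.
apply: le_trans (ler_sum _ (fun i _ => pr_le W S i k m0)) _.
apply: le_trans (_ : \sum_i (((rho + dot (mv W (row i S)) (row k S - zb)) * E
     + (rho - dot (mv W (row i S)) (row k S - zb)) * Ei) / (2 * rho)) / m%:R <= _).
  apply: ler_sum => i _; rewrite ler_pM2r ?invr_gt0 //; exact: chord_exp.
have -> : \sum_i ((rho + dot (mv W (row i S)) (row k S - zb)) * E
     + (rho - dot (mv W (row i S)) (row k S - zb)) * Ei) / (2 * rho) / m%:R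
  = \sum_i ((E + Ei) / (2 * m%:R) + ((E - Ei) / (2 * rho * m%:R)) * dot (mv W (row i S)) (row k S - zb)).
  apply: eq_bigr => i _; field; rewrite ?gt_eqF //.
rewrite sum_affine -dot_suml -mv_sum sum_rows_zbar // mvZ dotZl.
have hb : dot (mv W zb) (row k S - zb) <= r * rho.
  apply: le_trans (CS _ _) _; rewrite /rho.
  have : norm2 (mv W zb) <= G / 2 * r by exact: Wb.
  have := norm2_ge0 (mv W zb); have := norm2_ge0 (row k S - zb).
  have hh : 0 <= G / 2 * r by apply: mulr_ge0 => //; apply: divr_ge0; lra.
  move: dk; set a := norm2 (row k S - zb); set b := norm2 (mv W zb).
  have -> : r * (G * (1 + r) / 2) = (G / 2 * r) * (1 + r) by field.
  move=> h1 h2 h3 h4; apply: ler_pM => //.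
have c0 : 0 <= (E - Ei) / (2 * rho * m%:R).
  by apply: divr_ge0; [lra|apply: mulr_ge0 => //; apply: mulr_ge0 => //; lra].
apply: le_trans (_ : m%:R * ((E + Ei) / (2 * m%:R)) +
   (E - Ei) / (2 * rho * m%:R) * (m%:R * (r * rho)) <= _).
  by rewrite lerD2l ler_wpM2l // ler_wpM2l // ltW.
rewrite le_eqVlt; apply/orP; left; apply/eqP; field; rewrite ?gt_eqF //.
Qed.


Lemma T_bound m d (W : 'M[R]_d) (S : 'M[R]_(m, d)) (G : R) k :
  (0 < m)%N -> 0 < G -> validS S -> opnorm W <= G / 2 ->
  \sum_j pr W S k j * norm2 (row j S - mu W S k) ^+ 2 <=
  (1 - norm2 (zbar S) ^+ 2) * (2 * expR (G * (1 + norm2 (zbar S)) / 2) - 1).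
Proof.
move=> m0 G0 vS hW.
set zb := zbar S; set r := norm2 zb; set rho := G * (1 + r) / 2.
set E := expR rho; set mk := mu W S k.
set p := pr W S k.
have mr0 : (0 : R) < m%:R by rewrite ltr0n.
have r0 : 0 <= r by exact: norm2_ge0.
have r1 : r <= 1 by exact: zbar_norm.
have Wb x : norm2 (mv W x) <= G / 2 * norm2 x by exact: opnorm_le.
have sp : \sum_j p j = 1 by exact: sum_pr.
have p0 j : 0 <= p j by exact: pr_ge0.
have T1 : \sum_j p j * norm2 (row j S - mk) ^+ 2
    = \sum_j p j * dot (row j S) (row j S) - dot mk mk.
  have e j : p j * norm2 (row j S - mk) ^+ 2 =
      p j * dot (row j S) (row j S) - 2 * (p j * dot (row j S) mk) + p j * dot mk mk.
    by rewrite norm2_sq !(dotBl, dotBr) (dotC mk (row j S)); ring.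
  rewrite (eq_bigr _ (fun j _ => e j)) big_split /= sumrB -!mulr_sumr -mulr_suml sp mul1r.
  have -> : \sum_j p j * dot (row j S) mk = dot mk mk.
    transitivity (dot (\sum_j p j *: row j S) mk); last by [].
    by rewrite dot_suml; apply: eq_bigr => j _; rewrite dotZl.
  ring.
rewrite T1.
have zz j : dot (row j S) (row j S) <= 1.
  rewrite -norm2_sq; have := vS j; have := norm2_ge0 (row j S).
  set a := norm2 (row j S) => h1 h2; rewrite expr2; nra.
have T2 : \sum_j p j * dot (row j S) (row j S) <= 1.
  rewrite -sp; apply: ler_sum => j _; rewrite -[X in _ <= X]mulr1; exact: ler_wpM2l.
have rr : dot zb zb = r ^+ 2 by rewrite norm2_sq.
have mm : 2 * dot mk zb - r ^+ 2 <= dot mk mk.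
  have := dot_ge0 (mk - zb); rewrite !(dotBl, dotBr) (dotC zb mk) rr; lra.
have muzb : dot mk zb = \sum_j p j * dot (row j S) zb.
  transitivity (dot (\sum_j p j *: row j S) zb); first by [].
  by rewrite dot_suml; apply: eq_bigr => j _; rewrite dotZl.
have pb j : p j <= E / m%:R.
  apply: le_trans (pr_le W S k j m0) _; rewrite ler_pM2r ?invr_gt0 // ler_expR.
  apply: le_trans (ler_norm _) _; apply: le_trans (CSabs _ _) _.
  have -> : rho = (G / 2 * 1) * (1 + r) by rewrite /rho; field.
  apply: ler_pM; rewrite ?norm2_ge0 //.
    apply: le_trans (Wb _) _.
    by apply: ler_wpM2l; [apply: divr_ge0; lra|exact: vS].
  by apply: le_trans (norm2B _ _) _; rewrite lerD2r.
have nz j : 0 <= 1 - dot (row j S) zb.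
  have := CS (row j S) zb; have := vS j; have := norm2_ge0 (row j S).
  rewrite -/r; set a := norm2 (row j S) => h1 h2 h3; nra.
have sz : \sum_j dot (row j S) zb = m%:R * r ^+ 2.
  by rewrite -dot_suml sum_rows_zbar // dotZl rr.
have D1 : 1 - dot mk zb <= E * (1 - r ^+ 2).
  have -> : 1 - dot mk zb = \sum_j p j * (1 - dot (row j S) zb).
    rewrite muzb -[X in X - _]sp -sumrB; apply: eq_bigr => j _; ring.
  apply: le_trans (_ : \sum_j E / m%:R * (1 - dot (row j S) zb) <= _).
    by apply: ler_sum => j _; apply: ler_wpM2r.
  rewrite -mulr_sumr sumrB sumr_const card_ord sz.
  rewrite le_eqVlt; apply/orP; left; apply/eqP; field; rewrite ?gt_eqF //.
have -> : (1 - r ^+ 2) * (2 * E - 1) = r ^+ 2 - 1 + 2 * (E * (1 - r ^+ 2)) by ring.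
lra.
Qed.


Lemma core_k m d (W : 'M[R]_d) (S : 'M[R]_(m, d)) (G : R) k :
  (0 < m)%N -> 0 < G -> validS S -> opnorm W <= G / 2 ->
  (1 + G) * \sum_i pr W S i k
  + G / 2 * \sum_j pr W S k j * norm2 (row j S - mu W S k) ^+ 2
  <= (1 + G) * expR G.
Proof.
move=> m0 G0 vS hW.
apply: le_trans (key_ineq G0 (norm2_ge0 (zbar S)) (zbar_norm m0 vS)).
apply: lerD.
  by apply: ler_wpM2l; [lra|exact: C_bound].
by apply: ler_wpM2l; [apply: divr_ge0; lra|exact: T_bound].
Qed.

End Core.

Section Dbd.
Context {R : realType}.

Definition ds m d (W : 'M[R]_d) (S D : 'M[R]_(m, d)) (i j : 'I_m) : R :=
  dot (mv W (row i D)) (row j S) + dot (mv W (row i S)) (row j D).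
Definition cc m d (V : 'M[R]_d) (S U : 'M[R]_(m, d)) (i j : 'I_m) : R :=
  dot (row i U) (mv V (row j S)).
Definition Dexpr m d (W V : 'M[R]_d) (S D U : 'M[R]_(m, d)) : R :=
  \sum_i \sum_j (pr W S i j * (ds W S D i j - \sum_l pr W S i l * ds W S D i l)
                   * cc V S U i j + pr W S i j * cc V D U i j).

Lemma prod_bound (a b al be : R) : `|a| <= al -> `|b| <= be -> a * b <= al * be.
Proof.
move=> ha hb; apply: le_trans (ler_norm _) _; rewrite normrM.
by apply: ler_pM => //; rewrite normr_ge0.
Qed.

Lemma sum_sh1 m (p f g : 'I_m -> R) x :
  \sum_j p j * (f j - x) * g j = \sum_j p j * f j * g j - x * \sum_j p j * g j.
Proof. by rewrite mulr_sumr -sumrB; apply: eq_bigr => j _; ring. Qed.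

Lemma sum_sh2 m (p f g : 'I_m -> R) x y :
  \sum_j p j * (f j - x) * (g j - y) =
  \sum_j p j * f j * g j - y * \sum_j p j * f j - x * \sum_j p j * g j + x * y * \sum_j p j.
Proof.
rewrite !mulr_sumr -!sumrB -big_split /=; apply: eq_bigr => j _; ring.
Qed.

Lemma sum_cov m (p A B c : 'I_m -> R) : \sum_j p j = 1 ->
  \sum_j p j * ((A j + B j) - \sum_l p l * (A l + B l)) * c j
  = \sum_j p j * (A j - \sum_l p l * A l) * (c j - \sum_l p l * c l)
    + \sum_j p j * B j * (c j - \sum_l p l * c l).
Proof.
move=> sp.
have hAB : \sum_l p l * (A l + B l) = \sum_l p l * A l + \sum_l p l * B l.
  by rewrite -big_split /=; apply: eq_bigr => l _; ring.
rewrite hAB sum_sh1 sum_sh2 sp.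
have -> : \sum_j p j * B j * (c j - \sum_l p l * c l)
   = \sum_j p j * B j * c j - (\sum_l p l * c l) * \sum_j p j * B j.
  by rewrite mulr_sumr -sumrB; apply: eq_bigr => j _; ring.
have -> : \sum_j p j * (A j + B j) * c j = \sum_j p j * A j * c j + \sum_j p j * B j * c j.
  by rewrite -big_split /=; apply: eq_bigr => j _; ring.
move: (\sum_j p j * A j * c j) (\sum_j p j * B j * c j) (\sum_l p l * A l)
  (\sum_l p l * B l) (\sum_l p l * c l) => a b x y z.
ring.
Qed.

Lemma Ubound d (V : 'M[R]_d) (u x : 'rV[R]_d) : norm2 u <= 1 -> opnorm V <= 1 ->
  `|dot u (mv V x)| <= norm2 x.
Proof.
move=> hu hV; apply: le_trans (CSabs _ _) _.
have h1 := opnorm_le x hV; rewrite mul1r in h1.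
have h2 := norm2_ge0 (mv V x); have h3 := norm2_ge0 u.
by rewrite -[X in _ <= X]mul1r; apply: ler_pM.
Qed.

Lemma Wbound d (W : 'M[R]_d) (G : R) (a b : 'rV[R]_d) : 0 <= G -> opnorm W <= G / 2 ->
  `|dot (mv W a) b| <= G / 2 * norm2 a * norm2 b.
Proof.
move=> G0 hW; apply: le_trans (CSabs _ _) _.
by apply: ler_wpM2r; [exact: norm2_ge0|exact: opnorm_le].
Qed.

Lemma term_bound m d (W V : 'M[R]_d) (S D U : 'M[R]_(m, d)) (G : R) i :
  0 < G -> validS S -> opnorm W <= G / 2 -> opnorm V <= 1 -> norm2 (row i U) <= 1 ->
  \sum_j (pr W S i j * (ds W S D i j - \sum_l pr W S i l * ds W S D i l)
                   * cc V S U i j + pr W S i j * cc V D U i j)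
  <= G / 2 * norm2 (row i D) * \sum_j pr W S i j * norm2 (row j S - mu W S i) ^+ 2
     + (1 + G) * \sum_j pr W S i j * norm2 (row j D).
Proof.
move=> G0 vS hW hV hU.
set p := pr W S i.
have sp : \sum_j p j = 1 by exact: sum_pr.
have p0 j : 0 <= p j by exact: pr_ge0.
rewrite big_split /=.
rewrite /ds (sum_cov (fun j => dot (mv W (row i D)) (row j S))
                     (fun j => dot (mv W (row i S)) (row j D))
                     (fun j => cc V S U i j) sp).
set mk := mu W S i.
have hA : \sum_l p l * dot (mv W (row i D)) (row l S) = dot (mv W (row i D)) mk.
  transitivity (dot (mv W (row i D)) (\sum_l p l *: row l S)); last by [].
  by rewrite dot_sumr; apply: eq_bigr => l _; rewrite dotZr.
have hc : \sum_l p l * cc V S U i l = dot (row i U) (mv V mk).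
  transitivity (dot (row i U) (mv V (\sum_l p l *: row l S))); last by [].
  by rewrite mv_sum dot_sumr; apply: eq_bigr => l _; rewrite mvZ dotZr.
rewrite hA hc.
have Gh : 0 <= G / 2 by apply: divr_ge0; lra.
have ej j : norm2 (row j S - mk) <= 2.
  apply: le_trans (norm2B _ _) _; have := vS j; have := mu_norm W i vS; rewrite -/mk; lra.
have s1 : \sum_j p j * (dot (mv W (row i D)) (row j S) - dot (mv W (row i D)) mk)
      * (cc V S U i j - dot (row i U) (mv V mk))
    <= \sum_j p j * (G / 2 * norm2 (row i D) * norm2 (row j S - mk)
                      * norm2 (row j S - mk)).
  apply: ler_sum => j _; rewrite -mulrA; apply: ler_wpM2l => //.
  apply: prod_bound.
    by rewrite -dotBr; exact: (Wbound _ _ (ltW G0) hW).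
  by rewrite /cc -dotBr -mvB; exact: Ubound.
have s2 : \sum_j p j * dot (mv W (row i S)) (row j D)
      * (cc V S U i j - dot (row i U) (mv V mk))
    <= \sum_j p j * (G / 2 * 1 * norm2 (row j D) * 2).
  apply: ler_sum => j _; rewrite -mulrA; apply: ler_wpM2l => //.
  apply: prod_bound.
    apply: le_trans (Wbound _ _ (ltW G0) hW) _.
    apply: ler_wpM2r; first exact: norm2_ge0.
    by apply: ler_wpM2l => //; exact: vS.
  by apply: le_trans (ej j); rewrite /cc -dotBr -mvB; exact: Ubound.
have s3 : \sum_j p j * cc V D U i j <= \sum_j p j * norm2 (row j D).
  apply: ler_sum => j _; apply: ler_wpM2l => //.
  by apply: le_trans (ler_norm _) _; exact: Ubound.
have e1 : \sum_j p j * (G / 2 * norm2 (row i D) * norm2 (row j S - mk) * norm2 (row j S - mk))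
    = G / 2 * norm2 (row i D) * \sum_j p j * norm2 (row j S - mk) ^+ 2.
  by rewrite mulr_sumr; apply: eq_bigr => j _; rewrite expr2; ring.
have e2 : \sum_j p j * (G / 2 * 1 * norm2 (row j D) * 2) = G * \sum_j p j * norm2 (row j D).
  by rewrite mulr_sumr; apply: eq_bigr => j _; field.
lra.
Qed.

Lemma Dbound m d (W V : 'M[R]_d) (S D U : 'M[R]_(m, d)) (G : R) :
  (0 < m)%N -> 0 < G -> validS S -> opnorm W <= G / 2 -> opnorm V <= 1 ->
  (forall i, norm2 (row i U) <= 1) ->
  Dexpr W V S D U <= (1 + G) * expR G * norm21 D.
Proof.
move=> m0 G0 vS hW hV hU.
apply: le_trans (ler_sum _ (fun i _ => term_bound D G0 vS hW hV (hU i))) _.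
rewrite big_split /=.
have -> : \sum_i (1 + G) * \sum_j pr W S i j * norm2 (row j D)
   = \sum_j norm2 (row j D) * ((1 + G) * \sum_i pr W S i j).
  transitivity (\sum_i \sum_j (1 + G) * (pr W S i j * norm2 (row j D))).
    by apply: eq_bigr => i _; rewrite mulr_sumr.
  rewrite exchange_big; apply: eq_bigr => j _.
  by rewrite !mulr_sumr; apply: eq_bigr => i _; ring.
rewrite /norm21 mulr_sumr -big_split /=; apply: ler_sum => k _.
have := @core_k _ m d W S G k m0 G0 vS hW.
have := norm2_ge0 (row k D).
move: (norm2 (row k D)) (\sum_j pr W S k j * norm2 (row j S - mu W S k) ^+ 2)
  (\sum_i pr W S i k) => n T C hn h.
have : n * ((1 + G) * C + G / 2 * T) <= n * ((1 + G) * expR G) by exact: ler_wpM2l.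
lra.
Qed.

End Dbd.

Import numFieldNormedType.Exports.

Section Der.
Context {R : realType}.

Lemma dEq (f : R -> R) (a b t : R) : is_derive t 1 f a -> a = b -> is_derive t 1 f b.
Proof. by move=> h <-. Qed.

Lemma dM (f g : R -> R) (df dg t : R) : is_derive t 1 f df -> is_derive t 1 g dg ->
  is_derive t 1 (fun x => f x * g x) (f t * dg + g t * df).
Proof. move=> hf hg; exact: (is_deriveM hf hg). Qed.

Lemma dD (f g : R -> R) (df dg t : R) : is_derive t 1 f df -> is_derive t 1 g dg ->
  is_derive t 1 (fun x => f x + g x) (df + dg).
Proof. move=> hf hg; exact: (is_deriveD hf hg). Qed.

Lemma dV (f : R -> R) (df t : R) : f t != 0 -> is_derive t 1 f df ->
  is_derive t 1 (fun x => (f x)^-1) (- (f t) ^- 2 * df).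
Proof. move=> h hf; exact: (is_deriveV h hf). Qed.

Lemma dE (f : R -> R) (df t : R) : is_derive t 1 f df ->
  is_derive t 1 (fun x => expR (f x)) (expR (f t) * df).
Proof. move=> hf; exact: (is_derive1_comp (f := expR) (g := f) _ hf). Qed.

Lemma dS n (h : 'I_n -> R -> R) (dh : 'I_n -> R) (t : R) :
  (forall i, is_derive t 1 (h i) (dh i)) ->
  is_derive t 1 (fun x => \sum_i h i x) (\sum_i dh i).
Proof.
move=> hh; have := is_derive_sum hh.
suff -> : (fun x => \sum_i h i x) = \sum_i h i by [].
by apply/funext => x; rewrite fct_sumE.
Qed.

Lemma dC (a t : R) : is_derive t 1 (fun _ => a) 0.
Proof. exact: is_derive_cst. Qed.

Lemma dId (t : R) : is_derive t 1 (fun x => x) 1.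
Proof. exact: is_derive_id. Qed.

Lemma dAff (a b t : R) : is_derive t 1 (fun x => a + x * b) b.
Proof.
apply: dEq (dD (dC a t) (dM (dId t) (dC b t))) _; ring.
Qed.

Lemma dDot n (x y x' y' : 'rV[R]_n) (t : R) :
  is_derive t 1 (fun s => dot (x + s *: y) (x' + s *: y'))
     (dot y (x' + t *: y') + dot (x + t *: y) y').
Proof.
have -> : (fun s => dot (x + s *: y) (x' + s *: y')) =
          (fun s => \sum_k (x 0 k + s * y 0 k) * (x' 0 k + s * y' 0 k)).
  by apply/funext => s; apply: eq_bigr => k _; rewrite !mxE.
apply: dEq (dS (fun k => dM (dAff (x 0 k) (y 0 k) t) (dAff (x' 0 k) (y' 0 k) t))) _.
rewrite /dot -big_split /=; apply: eq_bigr => k _; rewrite !mxE; ring.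
Qed.

Lemma soft_deriv m (s c : 'I_m -> R -> R) (ds dc : 'I_m -> R) (t : R) :
  (forall j, is_derive t 1 (s j) (ds j)) -> (forall j, is_derive t 1 (c j) (dc j)) ->
  is_derive t 1 (fun x => \sum_j expR (s j x) / (\sum_l expR (s l x)) * c j x)
   (\sum_j (expR (s j t) / (\sum_l expR (s l t))
             * (ds j - \sum_l expR (s l t) / (\sum_k expR (s k t)) * ds l) * c j t
           + expR (s j t) / (\sum_l expR (s l t)) * dc j)).
Proof.
move=> hs hc; apply: dS => j.
set Z := \sum_l expR (s l t).
have Z0 : 0 < Z.
  rewrite /Z (bigD1 j) //= ltr_pwDl ?expR_gt0 //.
  by apply: sumr_ge0 => l _; exact/ltW/expR_gt0.
have hZ : is_derive t 1 (fun x => \sum_l expR (s l x)) (\sum_l expR (s l t) * ds l).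
  exact: dS (fun l => dE (hs l)).
have hZi := @dV (fun x => \sum_l expR (s l x)) _ t (lt0r_neq0 Z0) hZ.
have he := dE (hs j).
have hp := dM he hZi.
apply: dEq (dM hp (hc j)) _.
have -> : \sum_l expR (s l t) / Z * ds l = (\sum_l expR (s l t) * ds l) / Z.
  by rewrite mulr_suml; apply: eq_bigr => l _; ring.
rewrite -/Z; field; exact: lt0r_neq0.
Qed.

End Der.

Import numFieldNormedType.Exports.
Local Open Scope classical_set_scope.
Local Open Scope ring_scope.

Section Att.
Context {R : realType}.

Lemma rowD' m d (A B : 'M[R]_(m, d)) i : row i (A + B) = row i A + row i B.
Proof. by apply/rowP => k; rewrite !mxE. Qed.
Lemma rowZ' m d (A : 'M[R]_(m, d)) (a : R) i : row i (a *: A) = a *: row i A.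
Proof. by apply/rowP => k; rewrite !mxE. Qed.
Lemma rowB' m d (A B : 'M[R]_(m, d)) i : row i (A - B) = row i A - row i B.
Proof. by apply/rowP => k; rewrite !mxE. Qed.

Lemma row_att m d (W V : 'M[R]_d) (S : 'M[R]_(m, d)) i :
  row i (att W V S) = \sum_j pr W S i j *: mv V (row j S).
Proof.
apply/rowP => k; rewrite mxE summxE /att mxE; apply: eq_bigr => j _.
rewrite !mxE /pr /Zs /sc; congr (expR _ / _ * _).
- by rewrite /dot /mv; apply: eq_bigr => l _; rewrite [(row j S)^T _ _]mxE.
- apply: eq_bigr => l _; rewrite !mxE /dot /mv; congr expR.
  by apply: eq_bigr => l' _; rewrite [(row l S)^T _ _]mxE.
Qed.

Lemma validS_path m d (S S' : 'M[R]_(m, d)) (t : R) : validS S -> validS S' ->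
  0 <= t <= 1 -> validS (S + t *: (S' - S)).
Proof.
move=> vS vS' /andP[t0 t1] j.
have -> : row j (S + t *: (S' - S)) = (1 - t) *: row j S + t *: row j S'.
  by apply/rowP => k; rewrite !mxE; ring.
apply: le_trans (norm2D _ _) _; rewrite !norm2Z !ger0_norm //; last lra.
have := vS j; have := vS' j; have := norm2_ge0 (row j S); have := norm2_ge0 (row j S').
nra.
Qed.

Lemma norm21N m d (A B : 'M[R]_(m, d)) : norm21 (A - B) = norm21 (B - A).
Proof. by apply: eq_bigr => i _; rewrite !rowB' norm2_distC. Qed.

Lemma att_lip m d (W V : 'M[R]_d) (S S' : 'M[R]_(m, d)) (G : R) :
  (0 < m)%N -> 0 < G -> validS S -> validS S' -> opnorm W <= G / 2 -> opnorm V <= 1 ->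
  norm21 (att W V S - att W V S') <= (1 + G) * expR G * norm21 (S - S').
Proof.
move=> m0 G0 vS vS' hW hV.
set D := S' - S.
set X := att W V S' - att W V S.
pose U : 'M[R]_(m, d) := \matrix_(i, k) ((norm2 (row i X))^-1 * X i k).
have rowU i : row i U = (norm2 (row i X))^-1 *: row i X.
  by apply/rowP => k; rewrite !mxE.
have hU i : norm2 (row i U) <= 1.
  rewrite rowU norm2Z ger0_norm ?invr_ge0 ?norm2_ge0 //.
  have [->|n0] := eqVneq (norm2 (row i X)) 0; first by rewrite invr0 mul0r.
  by rewrite mulVf.
have dU i : dot (row i U) (row i X) = norm2 (row i X).
  rewrite rowU dotZl -norm2_sq.
  have [->|n0] := eqVneq (norm2 (row i X)) 0; first by rewrite invr0 mul0r.
  by rewrite expr2 mulrA mulVf // mul1r.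
pose P (t : R) := S + t *: D.
have rowP' t j : row j (P t) = row j S + t *: row j D by rewrite rowD' rowZ'.
pose g (t : R) := \sum_i \sum_j expR (sc W (P t) i j) / (\sum_l expR (sc W (P t) i l))
   * cc V (P t) U i j.
have gE t : g t = \sum_i dot (row i U) (row i (att W V (P t))).
  apply: eq_bigr => i _; rewrite row_att dot_sumr; apply: eq_bigr => j _.
  by rewrite dotZr /pr /Zs /cc.
have hg (t : R) : is_derive t 1 g (Dexpr W V (P t) D U).
  rewrite /g /Dexpr; apply: dS => i.
  apply: dEq (@soft_deriv _ m (fun j x => sc W (P x) i j) (fun j x => cc V (P x) U i j)
      (fun j => ds W (P t) D i j) (fun j => cc V D U i j) t _ _) _.
  - move=> j.
    have -> : (fun x => sc W (P x) i j) =
      (fun x => dot (mv W (row i S) + x *: mv W (row i D)) (row j S + x *: row j D)).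
      by apply/funext => x; rewrite /sc !rowP' mvD mvZ.
    by apply: dEq (dDot _ _ _ _ t) _; rewrite /ds !rowP' mvD mvZ.
  - move=> j.
    have -> : (fun x => cc V (P x) U i j) =
      (fun x => dot (row i U + x *: 0) (mv V (row j S) + x *: mv V (row j D))).
      by apply/funext => x; rewrite /cc rowP' mvD mvZ scaler0 addr0.
    by apply: dEq (dDot _ _ _ _ t) _; rewrite dot0l add0r scaler0 addr0.
  - by [].
have cg : {within `[0, 1], continuous g}.
  apply: derivable_within_continuous => x _; by case: (hg x).
have [c c01 hc] := MVT_segment ler01 (fun x _ => hg x) cg.
rewrite subr0 mulr1 in hc.
have vP : validS (P c).
  by apply: validS_path => //; move: c01; rewrite in_itv.
have HB := Dbound D m0 G0 vP hW hV hU.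
rewrite (norm21N (att W V S)) (norm21N S) -/X -/D.
have : g 1 - g 0 = norm21 X.
  rewrite !gE -sumrB /norm21; apply: eq_bigr => i _.
  rewrite -dotBr.
  have -> : P 1 = S' by rewrite /P /D scale1r addrC subrK.
  have -> : P 0 = S by rewrite /P scale0r addr0.
  by rewrite -rowB' dU.
rewrite hc => <-; exact: HB.
Qed.

End Att.

Local Close Scope classical_set_scope.
Local Open Scope ring_scope.

Section Lay.
Context {R : realType}.

Lemma act_sq phi (a : R) : act_fun phi a ^+ 2 <= a ^+ 2.
Proof.
case: phi => //=; rewrite /Num.max; case: ifP => h; rewrite ?expr0n ?sqr_ge0 //.
Qed.

Lemma act_lip1 phi (a b : R) : (act_fun phi a - act_fun phi b) ^+ 2 <= (a - b) ^+ 2.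
Proof.
case: phi => //=.
rewrite /Num.max; case: ifP => h1; case: ifP => h2; rewrite ?subrr ?expr0n ?sqr_ge0 //.
- rewrite sub0r sqrrN; move/negbT: h2; rewrite -leNgt => h2.
  move: h1 => /ltW h1; rewrite !expr2; nra.
- rewrite subr0; move/negbT: h1; rewrite -leNgt => h1.
  move: h2 => /ltW h2; rewrite !expr2; nra.
Qed.

Lemma norm2_act d phi (y : 'rV[R]_d) : norm2 (\row_k act_fun phi (y 0 k)) <= norm2 y.
Proof.
by rewrite /norm2 ler_wsqrtr //; apply: ler_sum => k _; rewrite mxE act_sq.
Qed.

Lemma norm2_act_lip d phi (x y : 'rV[R]_d) :
  norm2 (\row_k act_fun phi (x 0 k) - \row_k act_fun phi (y 0 k)) <= norm2 (x - y).
Proof.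
rewrite /norm2 ler_wsqrtr //; apply: ler_sum => k _; rewrite !mxE; exact: act_lip1.
Qed.

Lemma row_mlp m d phi (M : 'I_m -> 'M[R]_d) (X : 'M[R]_(m, d)) j :
  row j (par_mlp phi M X) = \row_k act_fun phi ((mv (M j) (row j X)) 0 k).
Proof. by apply/rowP => k; rewrite !mxE. Qed.

Lemma att_valid m d (W V : 'M[R]_d) (S : 'M[R]_(m, d)) :
  opnorm V <= 1 -> validS S -> validS (att W V S).
Proof.
move=> hV vS i; rewrite row_att; apply: norm2_convex.
- by move=> j; exact: pr_ge0.
- exact: sum_pr.
- move=> j; apply: le_trans (opnorm_le _ hV) _; rewrite mul1r; exact: vS.
Qed.

Lemma mlp_valid m d phi (M : 'I_m -> 'M[R]_d) (X : 'M[R]_(m, d)) :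
  (forall j, opnorm (M j) <= 1) -> validS X -> validS (par_mlp phi M X).
Proof.
move=> hM vX j; rewrite row_mlp; apply: le_trans (norm2_act _ _) _.
apply: le_trans (opnorm_le _ (hM j)) _; rewrite mul1r; exact: vX.
Qed.

Lemma mlp_lip m d phi (M : 'I_m -> 'M[R]_d) (X Y : 'M[R]_(m, d)) :
  (forall j, opnorm (M j) <= 1) ->
  norm21 (par_mlp phi M X - par_mlp phi M Y) <= norm21 (X - Y).
Proof.
move=> hM; apply: ler_sum => j _; rewrite !rowB' !row_mlp.
apply: le_trans (norm2_act_lip _ _ _) _; rewrite -mvB.
by apply: le_trans (opnorm_le _ (hM j)) _; rewrite mul1r.
Qed.

Lemma layers_bound m d L phi (G : R) (W V : nat -> 'M[R]_d) (M : nat -> 'I_m -> 'M[R]_d)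
  (S S' : 'M[R]_(m, d)) :
  (0 < m)%N -> 0 < G ->
  (forall i, (i < L)%N ->
     opnorm (V i) <= 1 /\ (forall j, opnorm (M i j) <= 1) /\ opnorm (W i) <= G / 2) ->
  validS S -> validS S' ->
  forall k, (k <= L)%N ->
  [/\ validS (tf_layers phi W V M k S), validS (tf_layers phi W V M k S') &
      norm21 (tf_layers phi W V M k S - tf_layers phi W V M k S')
        <= ((1 + G) * expR G) ^+ k * norm21 (S - S')].
Proof.
move=> m0 G0 hw vS vS'; elim=> [|k IH] hk /=.
  by split => //; rewrite expr0 mul1r.
have [v1 v2 v3] := IH (ltnW hk).
have [hV [hM hW]] := hw k hk.
split.
- by apply: mlp_valid => //; exact: att_valid.
- by apply: mlp_valid => //; exact: att_valid.
apply: le_trans; first exact: mlp_lip.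
apply: le_trans (att_lip m0 G0 v1 v2 hW hV) _.
have K0 : 0 <= (1 + G) * expR G by apply: mulr_ge0; [lra|exact/ltW/expR_gt0].
rewrite exprS; move: K0; set K := (1 + G) * expR G => K0.
by rewrite -mulrA; apply: ler_wpM2l.
Qed.

End Lay.

Section Fin.
Context {R : realType}.

Lemma TF_diff m d phi L (H : 'M[R]_(m, d)) W V M (S S' : 'M[R]_(m, d)) :
  TF phi L H W V M S - TF phi L H W V M S'
  = \sum_j dot (row j H) (row j (tf_layers phi W V M L S - tf_layers phi W V M L S')).
Proof.
rewrite /TF -sumrB; apply: eq_bigr => j _; rewrite -sumrB; apply: eq_bigr => k _.
by rewrite !mxE mulrBr.
Qed.

Lemma norm2inf_row m d (H : 'M[R]_(m, d)) j : norm2 (row j H) <= norm2inf H.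
Proof. exact: (le_bigmax (0 : R) (fun i => norm2 (row i H)) j). Qed.

Lemma part2 m d L phi (c G : R) (H : 'M[R]_(m, d)) W V M (S S' : 'M[R]_(m, d)) :
  (0 < m)%N -> 0 < G -> valid_weights L c G H W V M -> valid_input S -> valid_input S' ->
  `|TF phi L H W V M S - TF phi L H W V M S'|
    <= c / m%:R * ((1 + G) * expR G) ^+ L * norm21 (S - S').
Proof.
move=> m0 G0 [hw hH] vS vS'.
have [_ _ hb] := layers_bound phi m0 G0 hw vS vS' (leqnn L).
rewrite TF_diff.
set X := tf_layers phi W V M L S - tf_layers phi W V M L S' in hb *.
have cm0 : 0 <= c / m%:R.
  by apply: le_trans (norm2_ge0 (row (Ordinal m0) H)) (le_trans (norm2inf_row H _) hH).
apply: le_trans (ler_norm_sum _ _ _) _.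
apply: le_trans (_ : \sum_j c / m%:R * norm2 (row j X) <= _).
  apply: ler_sum => j _; apply: le_trans (CSabs _ _) _.
  apply: ler_wpM2r; first exact: norm2_ge0.
  exact: le_trans (norm2inf_row H _) hH.
rewrite -mulr_sumr -/(norm21 X) -[c / m%:R * _ * _]mulrA; exact: ler_wpM2l.
Qed.

Lemma opnorm1 d : opnorm (1%:M : 'M[R]_d) <= 1.
Proof.
apply: ge_sup; first by exists (norm2 (mv 1%:M (0 : 'rV[R]_d))), 0 => //=; rewrite norm2_0 ler01.
by move=> _ [x hx <-]; rewrite /mv trmx1 mulmx1.
Qed.

Lemma opnorm0 d (a : R) : 0 <= a -> opnorm (0 : 'M[R]_d) <= a.
Proof.
move=> a0; apply: ge_sup; first by exists (norm2 (mv 0 (0 : 'rV[R]_d))), 0 => //=; rewrite norm2_0 ler01.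
by move=> _ [x hx <-]; rewrite /mv trmx0 mulmx0 norm2_0.
Qed.

Lemma act_id phi (x : R) : 0 <= x -> act_fun phi x = x.
Proof.
case: phi => //= x0; rewrite /Num.max; case: ifP => // h.
by move: h; rewrite ltNge x0.
Qed.

Lemma part1 m d L phi (c G s : R) : (0 < m)%N -> (0 < d)%N -> 0 < c -> 0 < G ->
  (s = c \/ s = - c) ->
  exists (H : 'M[R]_(m, d)) (W V : nat -> 'M[R]_d) (M : nat -> 'I_m -> 'M[R]_d)
         (S : 'M[R]_(m, d)),
    valid_weights L c G H W V M /\ valid_input S /\ TF phi L H W V M S = s.
Proof.
move=> m0 d0 c0 G0 hs.
have mr0 : (0 : R) < m%:R by rewrite ltr0n.
pose i0 : 'I_d := Ordinal d0.
pose e : 'rV[R]_d := \row_k (if k == i0 then 1 else 0).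
have e0 k : 0 <= e 0 k by rewrite mxE; case: ifP.
have ee : \sum_k e 0 k * e 0 k = 1.
  rewrite (bigD1 i0) //= big1 ?addr0; first by rewrite !mxE eqxx mulr1.
  by move=> k /negbTE hk; rewrite !mxE hk mul0r.
have ne : norm2 e = 1.
  rewrite dot_norm2 /dot ee sqrtr1 //.
pose S0 : 'M[R]_(m, d) := \matrix_(j, k) e 0 k.
have rS j : row j S0 = e by apply/rowP => k; rewrite !mxE.
pose H0 : 'M[R]_(m, d) := \matrix_(j, k) (s / m%:R * e 0 k).
have rH j : row j H0 = (s / m%:R) *: e by apply/rowP => k; rewrite !mxE.
have as_ : `|s| = c by case: hs => ->; rewrite ?normrN gtr0_norm.
exists H0, (fun _ => 0), (fun _ => 1%:M), (fun _ _ => 1%:M), S0.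
split; [split|split].
- move=> i _; split; first exact: opnorm1.
  split; first by move=> j; exact: opnorm1.
  by apply: opnorm0; apply: divr_ge0; lra.
- apply: bigmax_le; first by apply: divr_ge0; lra.
  move=> j _; rewrite rH norm2Z ne mulr1 normrM as_ ger0_norm ?invr_ge0 //; lra.
- by move=> j; rewrite rS ne.
have hL k : tf_layers phi (fun _ => 0) (fun _ => 1%:M) (fun _ _ => 1%:M) k S0 = S0.
  elim: k => [//|k IH] /=; rewrite IH.
  have hA : att 0 1%:M S0 = S0.
    apply/row_matrixP => i; rewrite row_att rS.
    under eq_bigr => j _ do rewrite rS /mv trmx1 mulmx1.
    by rewrite -scaler_suml sum_pr scale1r.
  rewrite hA; apply/row_matrixP => j; rewrite row_mlp rS /mv trmx1 mulmx1.
  by apply/rowP => k0; rewrite mxE act_id.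
rewrite /TF hL.
transitivity (\sum_(j < m) s / m%:R).
  apply: eq_bigr => j _.
  transitivity (s / m%:R * \sum_k e 0 k * e 0 k); last by rewrite ee mulr1.
  rewrite mulr_sumr; apply: eq_bigr => k _.
  by rewrite !mxE mulrA.
by rewrite sumr_const card_ord -[_ *+ m]mulr_natr divfK // gt_eqF.
Qed.

End Fin.


Unset Implicit Arguments.
Set Strict Implicit.

Theorem theorem4 (R : realType) (m d L : nat) (phi : activation) (c Gamma : R) :
  (0 < m)%N -> (0 < d)%N -> 0 < c -> 0 < Gamma ->
  (forall s : R, (s = c \/ s = - c) ->
     exists (H : 'M[R]_(m, d)) (W V : nat -> 'M[R]_d) (M : nat -> 'I_m -> 'M[R]_d)
            (S : 'M[R]_(m, d)),
       valid_weights L c Gamma H W V M /\ valid_input S /\ TF phi L H W V M S = s)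
  /\
  (forall (H : 'M[R]_(m, d)) (W V : nat -> 'M[R]_d) (M : nat -> 'I_m -> 'M[R]_d),
     valid_weights L c Gamma H W V M ->
     forall S S' : 'M[R]_(m, d), valid_input S -> valid_input S' ->
       `|TF phi L H W V M S - TF phi L H W V M S'|
         <= c / m%:R * ((1 + Gamma) * expR Gamma) ^+ L * norm21 (S - S')).
Proof.
move=> m0 d0 c0 G0; split.
- by move=> s hs; apply: part1.
- by move=> H W V M hw S S' vS vS'; apply: part2.
Qed.
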